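(* In the robustified SAFFRON construction, let right node $k$ be a singleton whose defective item is $\ell$. Then the probability that the robust singleton rule at node $k$ fails to declare $\ell$ is at most $3n^{-\zeta}$, and the probability that it declares an item different from $\ell$ is at most $n^{-(2+\zeta)}$.
   Context: Items are indexed by $[n]$, $n=2^L$; exactly $K$ items are defective. $b_\ell\in\{0,1\}^L$ is the $L$-bit binary representation of $\ell-1$; $\overline{v}$ is the bitwise complement. Noise model: each test outcome is flipped independently with probability $q\in(0,1/2)$, i.e. the observed outcome vector is $y=A\odot x+w$ (addition mod 2), where $A\odot x$ is the vector of noiseless (Boolean OR) test outcomes and $w$ has i.i.d. Bernoulli$(q)$ entries. Assume an error-correcting code of rate $R$ with encoder $f:\{0,1\}^L\to\{0,1\}^{L/R}$ and decoder $g:\{0,1\}^{L/R}\to\{0,1\}^L$ such that for every $b\in\{0,1\}^L$, $\Pr(g(f(b)+w')\neq b)\le2^{-\zeta L}=n^{-\zeta}$ when $w'$ has i.i.d. Bernoulli$(q)$ entries, for a constant $\zeta>0$. Sequences $s_1=(i_1,\dots,i_n)$, $s_2=(j_1,\dots,j_n)$ are drawn independently and uniformly from $[n]^n$. Robustified signature of item $\ell$: $u_\ell=(f(b_\ell);\overline{f(b_\ell)};f(b_{i_\ell});\overline{f(b_{i_\ell})};f(b_{j_\ell});\overline{f(b_{j_\ell})})\in\{0,1\}^{6L/R}$. A bipartite graph with incidence matrix $T$ connects items to $M$ right nodes; for right node $k$ there are $6L/R$ tests, the $r$-th pooling items $\ell$ with $T_{k\ell}=1$ and $(u_\ell)_r=1$,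 so the observed measurement vector is $z_k=\bigvee_{\ell:T_{k\ell}x_\ell=1}u_\ell+w_k$ with $w_k$ i.i.d. Bernoulli$(q)$, split into six sections $z_k^1,\dots,z_k^6$ of length $L/R$. A right node is a singleton if connected to exactly one defective item. Robust singleton rule at node $k$: let $\ell_1,\ell_2,\ell_3$ be the indices with $b_{\ell_1}=g(z_k^1)$, $b_{\ell_2}=g(z_k^3)$, $b_{\ell_3}=g(z_k^5)$; if $i_{\ell_1}=\ell_2$ and $j_{\ell_1}=\ell_3$, declare item $\ell_1$ defective. Probabilities are over the noise and over $s_1,s_2$. *)

(* Defs.v *)
From HB Require Import structures.
From Stdlib Require Import Reals.
From mathcomp Require Import all_boot.
Set Implicit Arguments. Unset Strict Implicit. Unset Printing Implicit Defensive.

Local Open Scope R_scope.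

Lemma Rplus_assoc' : associative Rplus.
Proof. by move=> x y z; rewrite Rplus_assoc. Qed.
Lemma Rmult_assoc' : associative Rmult.
Proof. by move=> x y z; rewrite Rmult_assoc. Qed.
HB.instance Definition _ := Monoid.isComLaw.Build R 0 Rplus Rplus_assoc' Rplus_comm Rplus_0_l.
HB.instance Definition _ := Monoid.isComLaw.Build R 1 Rmult Rmult_assoc' Rmult_comm Rmult_1_l.

Definition prob (Omega : finType) (wt : Omega -> R) (E : pred Omega) : R :=
  \big[Rplus/0]_(o : Omega) (if E o then wt o else 0).

Definition bern_weight (q : R) (m : nat) (w : m.-tuple bool) : R :=
  \big[Rmult/1]_(j < m) (if tnth w j then q else 1 - q).

Definition xorv (m : nat) (a b : m.-tuple bool) : m.-tuple bool :=
  [tuple (tnth a j (+) tnth b j) | j < m].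
Definition complv (m : nat) (a : m.-tuple bool) : m.-tuple bool :=
  [tuple ~~ tnth a j | j < m].

Definition bits (L : nat) (l : 'I_(2 ^ L)) : L.-tuple bool :=
  [tuple odd (l %/ 2 ^ j) | j < L].

(* The index whose binary representation is v (None cannot occur). *)
Definition idx_of (L : nat) (v : L.-tuple bool) : option 'I_(2 ^ L) :=
  [pick l | bits l == v].

(* A sample: noise on the 6 sections of node k, and the sequences s1, s2. *)
Definition sample (L m : nat) : finType :=
  ({ffun 'I_6 -> m.-tuple bool} * {ffun 'I_(2 ^ L) -> 'I_(2 ^ L)}
     * {ffun 'I_(2 ^ L) -> 'I_(2 ^ L)})%type.

Definition sample_weight (L m : nat) (q : R) (o : sample L m) : R :=
  let: (w, s1, s2) := o in
  (\big[Rmult/1]_(s < 6) bern_weight q (w s))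
  * (/ INR (2 ^ L)%nat) ^ (2 ^ L)%nat * (/ INR (2 ^ L)%nat) ^ (2 ^ L)%nat.

(* Robustified signature u_l, split into its six sections of length m. *)
Definition signature (L m : nat) (f : L.-tuple bool -> m.-tuple bool)
  (s1 s2 : {ffun 'I_(2 ^ L) -> 'I_(2 ^ L)}) (l : 'I_(2 ^ L)) (s : 'I_6)
  : m.-tuple bool :=
  match val s with
  | 0%N => f (bits l)
  | 1%N => complv (f (bits l))
  | 2%N => f (bits (s1 l))
  | 3%N => complv (f (bits (s1 l)))
  | 4%N => f (bits (s2 l))
  | _ => complv (f (bits (s2 l)))
  end.

Definition measurement (L m M : nat) (f : L.-tuple bool -> m.-tuple bool)
  (T : 'I_M -> 'I_(2 ^ L) -> bool) (x : {set 'I_(2 ^ L)}) (k : 'I_M)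
  (o : sample L m) (s : 'I_6) : m.-tuple bool :=
  let: (w, s1, s2) := o in
  xorv [tuple [exists l, [&& T k l, l \in x & tnth (signature f s1 s2 l s) j]] | j < m]
       (w s).

Definition robust_rule (L m M : nat) (f : L.-tuple bool -> m.-tuple bool)
  (g : m.-tuple bool -> L.-tuple bool)
  (T : 'I_M -> 'I_(2 ^ L) -> bool) (x : {set 'I_(2 ^ L)}) (k : 'I_M)
  (o : sample L m) : option 'I_(2 ^ L) :=
  let z := measurement f T x k o in
  let: (_, s1, s2) := o in
  match idx_of (g (z (@inord 5 0))), idx_of (g (z (@inord 5 2))),
        idx_of (g (z (@inord 5 4))) with
  | Some l1, Some l2, Some l3 =>
      if (s1 l1 == l2) && (s2 l1 == l3) then Some l1 else None
  | _, _, _ => None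
  end.

(* Main.v *)
Require Import Defs.
From HB Require Import structures.
From Stdlib Require Import Reals Lra.
From mathcomp Require Import all_boot.
Local Open Scope R_scope.

HB.instance Definition _ := Monoid.isMulLaw.Build R 0 Rmult Rmult_0_l Rmult_0_r.
HB.instance Definition _ := Monoid.isAddLaw.Build R Rmult Rplus Rmult_plus_distr_r Rmult_plus_distr_l.



Definition ind (b : bool) : R := if b then 1 else 0.


Lemma Rdistrr (T : finType) (a : R) (F : T -> R) :
  a * \big[Rplus/0]_(i : T) F i = \big[Rplus/0]_(i : T) (a * F i).
Proof. exact: big_distrr. Qed.
Lemma Rdistrl (T : finType) (a : R) (F : T -> R) :
  \big[Rplus/0]_(i : T) F i * a = \big[Rplus/0]_(i : T) (F i * a).
Proof. exact: big_distrl. Qed.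
Lemma sum_le (T : finType) (F G : T -> R) :
  (forall i, F i <= G i) -> \big[Rplus/0]_(i : T) F i <= \big[Rplus/0]_(i : T) G i.
Proof. move=> H; apply: (big_ind2 (fun a b => a <= b)) => //; [lra| move=> *; lra]. Qed.

Lemma sum_ge0 (T : finType) (F : T -> R) :
  (forall i, 0 <= F i) -> 0 <= \big[Rplus/0]_(i : T) F i.
Proof. move=> H; apply: (big_ind (fun a => 0 <= a)) => //; [lra| move=> *; lra]. Qed.

Lemma prod_ge0 (T : finType) (F : T -> R) :
  (forall i, 0 <= F i) -> 0 <= \big[Rmult/1]_(i : T) F i.
Proof. move=> H; apply: (big_ind (fun a => 0 <= a)) => //; [lra| move=> *; nra]. Qed.

Lemma sum_const_R (T : finType) (c : R) :
  \big[Rplus/0]_(i : T) c = INR #|T| * c.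
Proof.
rewrite big_const; elim: #|_| => [|k IH]; first by rewrite /=; lra. rewrite [iter _ _ _]/=.
by rewrite IH S_INR; ring.
Qed.

Lemma prod_const_R (T : finType) (c : R) :
  \big[Rmult/1]_(i : T) c = c ^ #|T|.
Proof.
rewrite big_const; elim: #|_| => [|k IH] //=. by rewrite IH.
Qed.

Lemma prod_prod (I J : finType) (F G : I -> J -> R) :
  \big[Rplus/0]_(f : {ffun I -> J}) ((\big[Rmult/1]_(i : I) F i (f i)) * \big[Rmult/1]_(i : I) G i (f i))
  = \big[Rmult/1]_(i : I) \big[Rplus/0]_(j : J) (F i j * G i j).
Proof.
rewrite bigA_distr_bigA; apply: eq_bigr => f _.
by rewrite -big_split.
Qed.

Lemma bern_ge0 q m (w : m.-tuple bool) : 0 < q < / 2 -> 0 <= bern_weight q w.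
Proof.
move=> Hq; rewrite /bern_weight; apply: prod_ge0 => j; case: (tnth w j); lra.
Qed.

Lemma bern_sum1 q m : \big[Rplus/0]_(w : m.-tuple bool) bern_weight q w = 1.
Proof.
rewrite (reindex (fun f : {ffun 'I_m -> bool} => [tuple f j | j < m])); last first.
  apply: onW_bij; exists (fun t => [ffun j => tnth t j]) => [f|t].
    by apply/ffunP => j; rewrite ffunE tnth_mktuple.
  by apply: eq_from_tnth => j; rewrite tnth_mktuple ffunE.
rewrite /bern_weight.
under eq_bigr => f _ do under eq_bigr => j _ do rewrite tnth_mktuple.
rewrite -(bigA_distr_bigA (fun (j : 'I_m) (b : bool) => if b then q else 1 - q)).
rewrite big1 // => j _; rewrite big_bool /=; lra.
Qed.

Section Marg.
Variables (I J : finType) (F : J -> R).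
Hypothesis F1 : \big[Rplus/0]_(j : J) F j = 1.

Lemma marg0 : \big[Rplus/0]_(f : {ffun I -> J}) \big[Rmult/1]_(i : I) F (f i) = 1.
Proof.
rewrite -(bigA_distr_bigA (fun (i : I) (j : J) => F j)) big1 //.
Qed.

Lemma marg1 (i0 : I) (H : J -> R) :
  \big[Rplus/0]_(f : {ffun I -> J}) ((\big[Rmult/1]_(i : I) F (f i)) * H (f i0))
  = \big[Rplus/0]_(j : J) (F j * H j).
Proof.
pose G i j := if i == i0 then H j else 1.
transitivity (\big[Rplus/0]_(f : {ffun I -> J})
   ((\big[Rmult/1]_(i : I) F (f i)) * \big[Rmult/1]_(i : I) G i (f i))).
  apply: eq_bigr => f _; congr (_ * _).
  rewrite (bigD1 i0) //= /G eqxx [X in _ * X]big1 ?Rmult_1_r // => i /negbTE -> //.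
rewrite (@prod_prod I J (fun (i : I) (j : J) => F j) G) (bigD1 i0) //=.
rewrite [X in _ * X]big1 ?Rmult_1_r => [|i /negbTE Hi].
  by apply: eq_bigr => j _; rewrite /G eqxx.
by rewrite /G; under eq_bigr do rewrite Hi Rmult_1_r.
Qed.


Lemma marg2 (i0 i1 : I) (H : J -> J -> R) : i1 != i0 ->
  \big[Rplus/0]_(f : {ffun I -> J}) ((\big[Rmult/1]_(i : I) F (f i)) * H (f i0) (f i1))
  = \big[Rplus/0]_(y : J) (F y * \big[Rplus/0]_(z : J) (F z * H y z)).
Proof.
move=> Hne.
pose G y i j := if i == i0 then ind (j == y) else if i == i1 then H y j else 1.
have E1 (f : {ffun I -> J}) y : \big[Rmult/1]_(i : I) G y i (f i) = ind (f i0 == y) * H y (f i1).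
  rewrite (bigD1 i0) //= (bigD1 i1) /=; last by rewrite Hne.
  rewrite /G eqxx (negbTE Hne) eqxx [X in _ * (_ * X)]big1 ?Rmult_1_r // => i /andP [/negbTE -> /negbTE ->] //.
have E2 (f : {ffun I -> J}) : H (f i0) (f i1) = \big[Rplus/0]_(y : J) \big[Rmult/1]_(i : I) G y i (f i).
  under eq_bigr do rewrite E1.
  rewrite (bigD1 (f i0)) //= eqxx big1 /=; first lra.
  by move=> y /negbTE; rewrite eq_sym /ind => ->; lra.
transitivity (\big[Rplus/0]_(f : {ffun I -> J}) \big[Rplus/0]_(y : J) ((\big[Rmult/1]_(i : I) F (f i)) * \big[Rmult/1]_(i : I) G y i (f i))).
  by apply: eq_bigr => f _; rewrite E2 Rdistrr.
rewrite exchange_big /=; apply: eq_bigr => y _.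
rewrite (@prod_prod I J (fun (i : I) (j : J) => F j) (G y)) (bigD1 i0) //= (bigD1 i1) /=; last by rewrite Hne.
rewrite /G eqxx (negbTE Hne) eqxx [X in _ * (_ * X)]big1 ?Rmult_1_r; last first.
  move=> i /andP [/negbTE -> /negbTE ->]; by under eq_bigr do rewrite Rmult_1_r.
congr (_ * _).
rewrite (bigD1 y) //= eqxx big1 /ind /=; first lra.
by move=> j /negbTE ->; lra.
Qed.
End Marg.
Lemma bits_aux (L a b : nat) : (a < 2 ^ L)%N -> (b < 2 ^ L)%N ->
  (forall j, (j < L)%N -> odd (a %/ 2 ^ j) = odd (b %/ 2 ^ j)) -> a = b.
Proof.
elim: L a b => [|L IH] a b.
  by rewrite expn0 !ltnS !leqn0 => /eqP -> /eqP ->.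
move=> Ha Hb H.
have H0 := H 0%N isT; rewrite expn0 !divn1 in H0.
have E : a %/ 2 = b %/ 2.
  apply: IH.
  - by rewrite ltn_divLR // -expnSr.
  - by rewrite ltn_divLR // -expnSr.
  move=> j Hj; rewrite -!divnMA -expnS; exact: H.
by rewrite (divn_eq a 2) (divn_eq b 2) E !modn2 H0.
Qed.

Lemma bits_inj L : injective (@bits L).
Proof.
move=> a b E; apply: val_inj; apply: (@bits_aux L); [exact: ltn_ord | exact: ltn_ord | move=> j Hj].
have := congr1 (fun t => tnth t (Ordinal Hj)) E.
by rewrite /bits !tnth_mktuple.
Qed.

Lemma idx_of_bits L (l : 'I_(2 ^ L)) : idx_of (bits l) = Some l.
Proof.
rewrite /idx_of; case: pickP => [l' /eqP /bits_inj -> //|].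
by move/(_ l); rewrite eqxx.
Qed.

Lemma meas_eq L m M (f : L.-tuple bool -> m.-tuple bool) (T : 'I_M -> 'I_(2 ^ L) -> bool)
  (x : {set 'I_(2 ^ L)}) (k : 'I_M) (l : 'I_(2 ^ L)) w s1 s2 s :
  [set l' in x | T k l'] = [set l] ->
  measurement f T x k (w, s1, s2) s = xorv (signature f s1 s2 l s) (w s).
Proof.
move=> Hs; rewrite /measurement; congr xorv; apply: eq_from_tnth => j.
rewrite tnth_mktuple; apply/existsP/idP => [[l' /and3P [Tl' xl' H]]|H].
  have : l' \in [set l' in x | T k l'] by rewrite inE xl' Tl'.
  by rewrite Hs inE => /eqP <-.
have : l \in [set l' in x | T k l'] by rewrite Hs inE.
rewrite inE => /andP [xl Tl]; exists l; by rewrite Tl xl H.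
Qed.

Lemma rule_eq L m M (f : L.-tuple bool -> m.-tuple bool) (g : m.-tuple bool -> L.-tuple bool)
  (T : 'I_M -> 'I_(2 ^ L) -> bool)
  (x : {set 'I_(2 ^ L)}) (k : 'I_M) (l : 'I_(2 ^ L)) w s1 s2 :
  [set l' in x | T k l'] = [set l] ->
  robust_rule f g T x k (w, s1, s2) =
  match idx_of (g (xorv (f (bits l)) (w (@inord 5 0)))),
        idx_of (g (xorv (f (bits (s1 l))) (w (@inord 5 2)))),
        idx_of (g (xorv (f (bits (s2 l))) (w (@inord 5 4)))) with
  | Some l1, Some l2, Some l3 =>
      if (s1 l1 == l2) && (s2 l1 == l3) then Some l1 else None
  | _, _, _ => None
  end.
Proof.
move=> Hs; rewrite /robust_rule !(@meas_eq L m M f T x k l w s1 s2 _ Hs) /signature.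
have h0 : val (@inord 5 0) = 0%N by exact: inordK.
have h2 : val (@inord 5 2) = 2%N by exact: inordK.
have h4 : val (@inord 5 4) = 4%N by exact: inordK.
by rewrite h0 h2 h4.
Qed.

Section Main.
Variables (L m : nat) (q : R).
Hypothesis Hq : 0 < q < / 2.

Local Notation n := (2 ^ L)%N.
Local Notation N := (INR (2 ^ L)).
Local Notation Fn := {ffun 'I_(2 ^ L) -> 'I_(2 ^ L)}.
Local Notation W6 := {ffun 'I_6 -> m.-tuple bool}.
Definition cU := \big[Rmult/1]_(i : 'I_(2 ^ L)) (/ INR (2 ^ L)).
Definition P6 (w : W6) := \big[Rmult/1]_(s : 'I_6) bern_weight q (w s).

Lemma N_pos : 0 < N.
Proof. apply: lt_0_INR; apply/ltP; by rewrite expn_gt0. Qed.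

Lemma sum_u : \big[Rplus/0]_(j : 'I_(2 ^ L)) (/ N) = 1.
Proof. rewrite sum_const_R card_ord; apply: Rinv_r; have := N_pos; lra. Qed.

Lemma cU_ge0 : 0 <= cU.
Proof. apply: prod_ge0 => _; have := N_pos => H; left; exact: Rinv_0_lt_compat. Qed.

Lemma P6_ge0 w : 0 <= P6 w.
Proof. apply: prod_ge0 => s; exact: bern_ge0. Qed.

Lemma sum_cU : \big[Rplus/0]_(s : Fn) cU = 1.
Proof. exact: (marg0 'I_(2 ^ L) 'I_(2 ^ L) (fun _ : 'I_(2 ^ L) => / N) sum_u). Qed.

Lemma weight_eq (w : W6) (s1 s2 : Fn) : @sample_weight L m q (w, s1, s2) = P6 w * cU * cU.
Proof. by rewrite /sample_weight /cU prod_const_R card_ord. Qed.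

Lemma sum_sample (phi : sample L m -> R) :
  \big[Rplus/0]_(o : sample L m) phi o
  = \big[Rplus/0]_(w : W6) \big[Rplus/0]_(s1 : Fn) \big[Rplus/0]_(s2 : Fn) phi (w, s1, s2).
Proof.
transitivity (\big[Rplus/0]_(p : (W6 * Fn) * Fn) phi (p.1, p.2)).
  by apply: eq_bigr => -[a b].
rewrite -(pair_bigA _ (fun ws s2 => phi (ws, s2))) /=.
transitivity (\big[Rplus/0]_(p : W6 * Fn) (fun w s1 => \big[Rplus/0]_(s2 : Fn) phi (w, s1, s2)) p.1 p.2).
  by apply: eq_bigr => -[a b].
by symmetry; apply: (pair_bigA _ (fun (w : W6) (s1 : Fn) => \big[Rplus/0]_(s2 : Fn) phi (w, s1, s2))).
Qed.

Lemma bound_w (k0 : 'I_6) (h : Fn -> Fn -> m.-tuple bool -> R) (eps : R) :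
  (forall s1 s2, \big[Rplus/0]_(t : m.-tuple bool) (bern_weight q t * h s1 s2 t) <= eps) ->
  \big[Rplus/0]_(w : W6) \big[Rplus/0]_(s1 : Fn) \big[Rplus/0]_(s2 : Fn)
     (P6 w * cU * cU * h s1 s2 (w k0)) <= eps.
Proof.
move=> He.
rewrite exchange_big /=.
under eq_bigr do rewrite exchange_big /=.
apply: Rle_trans (_ : \big[Rplus/0]_(s1 : Fn) \big[Rplus/0]_(s2 : Fn) (cU * cU * eps) <= eps).
  apply: sum_le => s1; apply: sum_le => s2.
  have -> : \big[Rplus/0]_(w : W6) (P6 w * cU * cU * h s1 s2 (w k0))
     = cU * cU * \big[Rplus/0]_(w : W6) (P6 w * h s1 s2 (w k0)).
    by rewrite Rdistrr; apply: eq_bigr => w _; ring.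
  rewrite /P6 (@marg1 _ _ (@bern_weight q m) (bern_sum1 q m) k0 (h s1 s2)).
  apply: Rmult_le_compat_l; last exact: He.
  have := cU_ge0; nra.
right.
transitivity (\big[Rplus/0]_(s1 : Fn) (cU * eps)).
  apply: eq_bigr => s1 _.
  transitivity (\big[Rplus/0]_(s2 : Fn) (cU * (cU * eps))); first by apply: eq_bigr => s2 _; ring.
  by rewrite -Rdistrl sum_cU; ring.
by rewrite -Rdistrl sum_cU; ring.
Qed.

Lemma bound_s (l l1 : 'I_(2 ^ L)) (A : 'I_(2 ^ L) -> option 'I_(2 ^ L)) : l1 != l ->
  \big[Rplus/0]_(s : Fn) (cU * ind (Some (s l1) == A (s l))) <= / N.
Proof.
move=> Hne.
have := (@marg2 _ _ (fun _ : 'I_(2 ^ L) => / N) sum_u l l1 (fun y z => ind (Some z == A y)) Hne).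
rewrite /= => E; rewrite /cU E.
have Hu : 0 < / N by apply: Rinv_0_lt_compat; exact: N_pos.
apply: Rle_trans (_ : \big[Rplus/0]_(y : 'I_(2 ^ L)) (/ N * / N) <= / N).
  apply: sum_le => y; apply: Rmult_le_compat_l; first lra.
  case: (A y) => [v|].
    rewrite (bigD1 v) //= eqxx big1 /ind /=; first lra.
    by move=> z /negbTE; rewrite -(inj_eq (@Some_inj _)) => ->; lra.
  rewrite big1 /ind /=; first lra.
  by move=> z _; lra.
right; rewrite sum_const_R card_ord; field; have := N_pos; lra.
Qed.

End Main.

Lemma ind_ge0 b : 0 <= ind b.
Proof. rewrite /ind; case: b; lra. Qed.

Lemma Rsplit (T : finType) (F G : T -> R) :
  \big[Rplus/0]_(i : T) (F i + G i) = \big[Rplus/0]_(i : T) F i + \big[Rplus/0]_(i : T) G i.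
Proof. exact: big_split. Qed.

Theorem lemma2
  (L m K M : nat) (q zeta : R)
  (f : L.-tuple bool -> m.-tuple bool) (g : m.-tuple bool -> L.-tuple bool)
  (T : 'I_M -> 'I_(2 ^ L) -> bool) (x : {set 'I_(2 ^ L)})
  (k : 'I_M) (l : 'I_(2 ^ L)) :
  0 < q < / 2 ->
  0 < zeta ->
  (forall b : L.-tuple bool,
     prob (@bern_weight q m) (fun w' => g (xorv (f b) w') != b)
       <= Rpower (INR (2 ^ L)%nat) (- zeta)) ->
  #|x| = K ->
  [set l' in x | T k l'] = [set l] ->
  prob (@sample_weight L m q) (fun o => robust_rule f g T x k o != Some l)
    <= 3 * Rpower (INR (2 ^ L)%nat) (- zeta)
  /\
  prob (@sample_weight L m q)
       (fun o => [exists l', (l' != l) && (robust_rule f g T x k o == Some l')])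
    <= Rpower (INR (2 ^ L)%nat) (- (2 + zeta)).
Proof.
move=> Hq Hz Hdec HK Hs.
set eps := Rpower (INR (2 ^ L)) (- zeta).
have Hdec' : forall b, \big[Rplus/0]_(t : m.-tuple bool)
    (bern_weight q t * ind (g (xorv (f b) t) != b)) <= eps.
  move=> b; apply: Rle_trans (Hdec b); right; rewrite /prob.
  by apply: eq_bigr => t _; rewrite /ind; case: ifP => _; ring.
have HX : forall w, 0 <= P6 m q w * cU L * cU L.
  move=> w; have := P6_ge0 m q Hq w; have := cU_ge0 L; nra.
split.
- rewrite /prob sum_sample.
  pose h0 (s1 s2 : {ffun 'I_(2 ^ L) -> 'I_(2 ^ L)}) (t : m.-tuple bool) :=
    ind (g (xorv (f (bits l)) t) != bits l).
  pose h2 (s1 s2 : {ffun 'I_(2 ^ L) -> 'I_(2 ^ L)}) (t : m.-tuple bool) :=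
    ind (g (xorv (f (bits (s1 l))) t) != bits (s1 l)).
  pose h4 (s1 s2 : {ffun 'I_(2 ^ L) -> 'I_(2 ^ L)}) (t : m.-tuple bool) :=
    ind (g (xorv (f (bits (s2 l))) t) != bits (s2 l)).
  apply: Rle_trans (_ : \big[Rplus/0]_w \big[Rplus/0]_s1 \big[Rplus/0]_s2
     (P6 m q w * cU L * cU L * (h0 s1 s2 (w (@inord 5 0)) + h2 s1 s2 (w (@inord 5 2))
         + h4 s1 s2 (w (@inord 5 4)))) <= _).
    apply: sum_le => w; apply: sum_le => s1; apply: sum_le => s2.
    rewrite weight_eq (rule_eq L m M f g T x k l w s1 s2 Hs) /h0 /h2 /h4.
    have HXw := HX w.
    case E0: (g (xorv (f (bits l)) (w (@inord 5 0))) == bits l);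
    case E2: (g (xorv (f (bits (s1 l))) (w (@inord 5 2))) == bits (s1 l));
    case E4: (g (xorv (f (bits (s2 l))) (w (@inord 5 4))) == bits (s2 l));
    rewrite /ind /=; try (case: ifP => _; nra).
    move/eqP: E0 => ->; move/eqP: E2 => ->; move/eqP: E4 => ->.
    rewrite !idx_of_bits !eqxx /=; lra.
  under eq_bigr => w _ do under eq_bigr => s1 _ do under eq_bigr => s2 _ do rewrite !Rmult_plus_distr_l.
  under eq_bigr => w _ do under eq_bigr => s1 _ do rewrite !Rsplit.
  under eq_bigr => w _ do rewrite !Rsplit.
  rewrite !Rsplit.
  apply: Rle_trans (_ : eps + eps + eps <= _); last lra.
  apply: Rplus_le_compat; first apply: Rplus_le_compat.
  + apply: (bound_w L m q (@inord 5 0) h0 eps) => s1 s2; exact: Hdec'.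
  + apply: (bound_w L m q (@inord 5 2) h2 eps) => s1 s2; exact: Hdec'.
  + apply: (bound_w L m q (@inord 5 4) h4 eps) => s1 s2; exact: Hdec'.
- rewrite /prob sum_sample.
  set u := / INR (2 ^ L).
  have Hu : 0 < u by apply: Rinv_0_lt_compat; exact: N_pos.
  pose alpha (w : {ffun 'I_6 -> m.-tuple bool}) (s1 : {ffun 'I_(2 ^ L) -> 'I_(2 ^ L)}) :=
    match idx_of (g (xorv (f (bits l)) (w (@inord 5 0)))) with
    | Some l1 => if l1 != l then ind (Some (s1 l1) == idx_of (g (xorv (f (bits (s1 l))) (w (@inord 5 2))))) else 0
    | None => 0 end.
  pose beta (w : {ffun 'I_6 -> m.-tuple bool}) (s2 : {ffun 'I_(2 ^ L) -> 'I_(2 ^ L)}) :=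
    match idx_of (g (xorv (f (bits l)) (w (@inord 5 0)))) with
    | Some l1 => if l1 != l then ind (Some (s2 l1) == idx_of (g (xorv (f (bits (s2 l))) (w (@inord 5 4))))) else 0
    | None => 0 end.
  pose d0 (t : m.-tuple bool) := ind (g (xorv (f (bits l)) t) != bits l).
  have alpha_ge0 w s1 : 0 <= alpha w s1.
    rewrite /alpha; case: idx_of => [l1|]; last lra; case: ifP => _; [exact: ind_ge0 | lra].
  have beta_ge0 w s2 : 0 <= beta w s2.
    rewrite /beta; case: idx_of => [l1|]; last lra; case: ifP => _; [exact: ind_ge0 | lra].
  apply: Rle_trans (_ : \big[Rplus/0]_w \big[Rplus/0]_s1 \big[Rplus/0]_s2
     (P6 m q w * cU L * cU L * (d0 (w (@inord 5 0)) * (alpha w s1 * beta w s2))) <= _).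
    apply: sum_le => w; apply: sum_le => s1; apply: sum_le => s2.
    rewrite weight_eq.
    case: ifP => [/existsP [l' /andP [Hl' /eqP]] | _]; last first.
      apply: Rmult_le_pos; first exact: HX.
      apply: Rmult_le_pos; first exact: ind_ge0.
      exact: Rmult_le_pos.
    rewrite (rule_eq L m M f g T x k l w s1 s2 Hs) /alpha /beta /d0.
    case Ea: (idx_of (g (xorv (f (bits l)) (w (@inord 5 0))))) => [l1|] //.
    case Eb: (idx_of (g (xorv (f (bits (s1 l))) (w (@inord 5 2))))) => [l2|] //.
    case Ec: (idx_of (g (xorv (f (bits (s2 l))) (w (@inord 5 4))))) => [l3|] //.
    case: ifP => // /andP [/eqP H1 /eqP H2] [El].
    subst l'.
    have Hd : g (xorv (f (bits l)) (w (@inord 5 0))) != bits l.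
      apply/negP => /eqP E; rewrite E idx_of_bits in Ea.
      by case: Ea => El; rewrite El eqxx in Hl'.
    rewrite Hl' H1 H2 /ind Hd !eqxx /=.
    have := HX w; lra.
  have S1b w : \big[Rplus/0]_(s1 : {ffun 'I_(2 ^ L) -> 'I_(2 ^ L)}) (cU L * alpha w s1) <= u.
    rewrite /alpha; case: idx_of => [l1|]; last first.
      by rewrite big1 => [|s1 _]; [lra | ring].
    case H: (l1 != l) => /=; last by rewrite big1 => [|s1 _]; [lra | ring].
    exact: (bound_s L l l1 (fun y => idx_of (g (xorv (f (bits y)) (w (@inord 5 2))))) H).
  have S2b w : \big[Rplus/0]_(s2 : {ffun 'I_(2 ^ L) -> 'I_(2 ^ L)}) (cU L * beta w s2) <= u.
    rewrite /beta; case: idx_of => [l1|]; last first.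
      by rewrite big1 => [|s1 _]; [lra | ring].
    case H: (l1 != l) => /=; last by rewrite big1 => [|s1 _]; [lra | ring].
    exact: (bound_s L l l1 (fun y => idx_of (g (xorv (f (bits y)) (w (@inord 5 4))))) H).
  have S1p w : 0 <= \big[Rplus/0]_(s1 : {ffun 'I_(2 ^ L) -> 'I_(2 ^ L)}) (cU L * alpha w s1).
    apply: sum_ge0 => s1; apply: Rmult_le_pos; [exact: cU_ge0 | exact: alpha_ge0].
  have S2p w : 0 <= \big[Rplus/0]_(s2 : {ffun 'I_(2 ^ L) -> 'I_(2 ^ L)}) (cU L * beta w s2).
    apply: sum_ge0 => s2; apply: Rmult_le_pos; [exact: cU_ge0 | exact: beta_ge0].
  apply: Rle_trans (_ : \big[Rplus/0]_w (P6 m q w * d0 (w (@inord 5 0)) * (u * u)) <= _).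
    apply: sum_le => w.
    have -> : \big[Rplus/0]_s1 \big[Rplus/0]_s2
        (P6 m q w * cU L * cU L * (d0 (w (@inord 5 0)) * (alpha w s1 * beta w s2)))
      = P6 m q w * d0 (w (@inord 5 0)) *
        ((\big[Rplus/0]_(s1 : {ffun 'I_(2 ^ L) -> 'I_(2 ^ L)}) (cU L * alpha w s1))
         * \big[Rplus/0]_(s2 : {ffun 'I_(2 ^ L) -> 'I_(2 ^ L)}) (cU L * beta w s2)).
      rewrite Rdistrl Rdistrr; apply: eq_bigr => s1 _.
      rewrite Rdistrr Rdistrr; apply: eq_bigr => s2 _; ring.
    apply: Rmult_le_compat_l.
      apply: Rmult_le_pos; [exact: P6_ge0 | exact: ind_ge0].
    apply: Rmult_le_compat; [exact: S1p | exact: S2p | exact: S1b | exact: S2b].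
  have -> : \big[Rplus/0]_w (P6 m q w * d0 (w (@inord 5 0)) * (u * u))
      = u * u * \big[Rplus/0]_w (P6 m q w * d0 (w (@inord 5 0))).
    by rewrite Rdistrr; apply: eq_bigr => w _; ring.
  rewrite /P6 (@marg1 _ _ (@bern_weight q m) (bern_sum1 q m) (@inord 5 0) d0).
  have Hd0 := Hdec' (bits l).
  have -> : Rpower (INR (2 ^ L)) (- (2 + zeta)) = u * u * eps.
    rewrite /eps /u Ropp_plus_distr Rpower_plus Rpower_Ropp.
    have -> : 2 = INR 2 by rewrite /=; lra.
    rewrite Rpower_pow; last exact: N_pos.
    field; have := N_pos L; lra.
  apply: Rmult_le_compat_l; first nra.
  exact: Hd0.
Qed.
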